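(* The following are equivalent: (i) $\sup_{d\in\mathbb N} n^{X_d}(\varepsilon)<\infty$ for every $\varepsilon\in(0,1)$; (ii) $\displaystyle\lim_{t\to0}\ \sup_{d\in\mathbb N}\sum_{k=1}^\infty \bar\lambda^{X_d}_k\,\mathbf 1\bigl(\bar\lambda^{X_d}_k<t\bigr)=0$.
   Context: For each $d\in\mathbb N$, $X_d$ is a random element of a separable Hilbert space $H_d$ with $\mathbb E X_d=0$ and $\mathbb E\|X_d\|_{H_d}^2<\infty$. For a centered Hilbert-space random element $Z$ with finite second moment, $\lambda^Z_1\ge\lambda^Z_2\ge\dots\ge 0$ denote the eigenvalues of its covariance operator $K^Z$ listed with multiplicity (padded with zeros if there are finitely many), $\Lambda^Z=\sum_k\lambda^Z_k=\mathbb E\|Z\|^2$, and $\bar\lambda^Z_k=\lambda^Z_k/\Lambda^Z$. It is assumed that $\lambda^{X_d}_1>0$ for all $d$. The average case approximation complexity is $n^{X_d}(\varepsilon)=\min\{n\in\mathbb N: e^{X_d}(n)\le \varepsilon\, e^{X_d}(0)\}$ for $\varepsilon\in(0,1)$, where $e^{X_d}(0)=(\mathbb E\|X_d\|^2)^{1/2}$ and $e^{X_d}(n)$ is the infimum of $(\mathbb E\|X_d-\sum_{m=1}^n l_m(X_d)\psi_m\|^2)^{1/2}$ over all $\psi_m\in H_d$, $l_m\in H_d^*$; equivalently $n^{X_d}(\varepsilon)=\min\{n\in\mathbb N:\ \sum_{k>n}\bar\lambda^{X_d}_k\le\varepsilon^2\}$. $\mathbf 1(A)$ is the indicator of the proposition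 $A$. *)

(* Defs.v *)
From Stdlib Require Import Reals Lra ClassicalEpsilon.
Open Scope R_scope.

(* The value of a convergent series sum_{k>=0} f k (chosen via epsilon;
   meaningful when the series converges, which is always assumed). *)
Definition series_value (f : nat -> R) : R :=
  epsilon (inhabits 0) (fun l => infinite_sum f l).

(* lam d k = lambda^{X_d}_{k+1}  (0-based index k). *)
Definition Lam (lam : nat -> nat -> R) (d : nat) : R := series_value (lam d).

Definition barlam (lam : nat -> nat -> R) (d k : nat) : R := lam d k / Lam lam d.

(* tail d n = sum_{k > n} bar lambda^{X_d}_k  (1-based k), i.e. 0-based indices >= n *)
Definition tail (lam : nat -> nat -> R) (d n : nat) : R :=
  series_value (fun j => barlam lam d (n + j)).

Definition ncompl (lam : nat -> nat -> R) (d : nat) (eps : R) : nat :=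
  epsilon (inhabits 0%nat)
    (fun n => tail lam d n <= eps ^ 2 /\
              forall m, tail lam d m <= eps ^ 2 -> (n <= m)%nat).

Definition small_mass (lam : nat -> nat -> R) (d : nat) (t : R) : R :=
  series_value (fun k => if Rlt_dec (barlam lam d k) t then barlam lam d k else 0).

(* Main.v *)
Require Import Defs.
From Stdlib Require Import Reals.
From Stdlib Require Import Lra Lia Wf_nat Classical ClassicalEpsilon.
From Coquelicot Require Import Coquelicot.
Open Scope R_scope.

Lemma sv_Series (f : nat -> R) : ex_series f -> series_value f = Series f.
Proof.
  intros H. unfold series_value.
  assert (Hs : exists l, infinite_sum f l).
  { exists (Series f). apply is_series_Reals. apply Series_correct. exact H. }
  pose proof (epsilon_spec (inhabits 0) (fun l => infinite_sum f l) Hs) as E.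
  simpl in E. apply is_series_Reals in E. symmetry. now apply is_series_unique.
Qed.

Section Seq.
Variable A : nat -> R.
Hypothesis Apos : forall k, 0 <= A k.
Hypothesis Adec : forall k, A (S k) <= A k.
Hypothesis Aex : ex_series A.
Hypothesis A1 : Series A = 1.

Definition T n := Series (fun j => A (n + j)%nat).
Definition G (t : R) k := if Rlt_dec (A k) t then A k else 0.

Lemma Tex n : ex_series (fun j => A (n + j)%nat).
Proof. now apply (ex_series_incr_n A n). Qed.

Lemma T_S n : T (S n) = T n - A n.
Proof.
  unfold T. rewrite (Series_incr_1 (fun j => A (n+j)%nat)) by apply Tex.
  rewrite Nat.add_0_r.
  rewrite (Series_ext (fun k => A (n + S k)%nat) (fun j => A (S n + j)%nat)).
  - ring.
  - intros; f_equal; lia.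
Qed.

Lemma T_ge0 n : 0 <= T n.
Proof.
  unfold T. apply Rle_trans with (Series (fun _ => 0)).
  - right. symmetry. apply is_series_unique.
    apply is_series_Reals. intros e He. exists 0%nat. intros m _.
    unfold R_dist. rewrite sum_cte. rewrite Rmult_0_l, Rminus_0_r, Rabs_R0. lra.
  - apply Series_le; [intros; split; [lra| apply Apos] | apply Tex].
Qed.

Lemma T_0 : T 0 = 1.
Proof. unfold T. rewrite <- A1. apply Series_ext. reflexivity. Qed.

Lemma T_mono n m : (n <= m)%nat -> T m <= T n.
Proof.
  induction 1. lra. rewrite T_S. pose proof (Apos m). lra.
Qed.

Lemma T_partial n : T (S n) = 1 - sum_f_R0 A n.
Proof.
  induction n.
  - rewrite T_S, T_0. simpl. ring.
  - rewrite T_S, IHn. simpl. ring.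
Qed.

Lemma T_small c : 0 < c -> exists n, T n <= c.
Proof.
  intros Hc. pose proof (Series_correct A Aex) as H. rewrite A1 in H.
  apply is_series_Reals in H. destruct (H c Hc) as [N HN].
  exists (S N). rewrite T_partial. specialize (HN N (le_n _)).
  unfold R_dist in HN. apply Rabs_def2 in HN. lra.
Qed.

Lemma A_dec_le j k : (j <= k)%nat -> A k <= A j.
Proof. induction 1. lra. pose proof (Adec m). lra. Qed.

Lemma sum_lower c k : (forall j, (j <= k)%nat -> c <= A j) -> INR (S k) * c <= sum_f_R0 A k.
Proof.
  induction k; intros H.
  - simpl. specialize (H 0%nat (le_n _)). lra.
  - rewrite S_INR. simpl sum_f_R0.
    assert (IH := IHk (fun j Hj => H j (le_S _ _ Hj))).
    specialize (H (S k) (le_n _)). lra.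
Qed.

Lemma counting t M : 0 < t -> INR M * t > 1 -> forall k, (M <= k)%nat -> A k < t.
Proof.
  intros Ht HM k Hk. destruct (Rlt_dec (A k) t) as [h|h]; auto. exfalso.
  assert (INR (S k) * t <= sum_f_R0 A k).
  { apply sum_lower. intros j Hj. pose proof (A_dec_le j k Hj). lra. }
  pose proof (T_partial k). pose proof (T_ge0 (S k)).
  assert (INR M <= INR (S k)) by (apply le_INR; lia).
  assert (INR M * t <= INR (S k) * t) by (apply Rmult_le_compat_r; lra).
  lra.
Qed.

Lemma G_bounds t k : 0 <= G t k <= A k.
Proof. unfold G. destruct (Rlt_dec (A k) t); pose proof (Apos k); lra. Qed.

Lemma G_ex t : ex_series (G t).
Proof.
  apply (ex_series_le (G t) A); auto. intros n.
  change (norm (G t n)) with (Rabs (G t n)). destruct (G_bounds t n).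
  rewrite Rabs_right; lra.
Qed.

Lemma G_upper N t : Series (G t) <= INR (S N) * Rabs t + T (S N).
Proof.
  rewrite (Series_incr_n (G t) (S N)) by (lia || apply G_ex). simpl pred.
  apply Rplus_le_compat.
  - clear. induction N.
    + simpl. unfold G. destruct (Rlt_dec (A 0) t).
      * pose proof (Rle_abs t). lra.
      * pose proof (Rabs_pos t). lra.
    + simpl sum_f_R0. rewrite S_INR.
      assert (G t (S N) <= Rabs t).
      { unfold G. destruct (Rlt_dec (A (S N)) t).
        - pose proof (Rle_abs t). lra.
        - pose proof (Rabs_pos t). lra. }
      lra.
  - unfold T. apply Series_le. intros; apply G_bounds. apply Tex.
Qed.

Lemma G_lower t M : 0 < t -> INR M * t > 1 -> (0 < M)%nat -> T M <= Series (G t).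
Proof.
  intros Ht HM HM0.
  rewrite (Series_incr_n (G t) M) by (auto || apply G_ex).
  assert (0 <= sum_f_R0 (G t) (pred M)).
  { apply cond_pos_sum. intros; apply G_bounds. }
  assert (T M = Series (fun k => G t (M + k)%nat)).
  { unfold T. apply Series_ext. intros n. unfold G.
    destruct (Rlt_dec (A (M+n)) t); auto.
    exfalso. apply n0. apply (counting t M); auto; lia. }
  lra.
Qed.

End Seq.

Section Main.
Variable lam : nat -> nat -> R.
Hypothesis Hnonneg : forall d k, 0 <= lam d k.
Hypothesis Hdecr : forall d k, lam d (S k) <= lam d k.
Hypothesis Hsum : forall d, exists L, infinite_sum (lam d) L.
Hypothesis Hpos : forall d, 0 < lam d 0%nat.

Lemma lam_ex d : ex_series (lam d).
Proof. destruct (Hsum d) as [L HL]. exists L. now apply is_series_Reals. Qed.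

Lemma Lam_pos d : 0 < Lam lam d.
Proof.
  unfold Lam. rewrite sv_Series by apply lam_ex.
  rewrite Series_incr_1 by apply lam_ex.
  pose proof (T_ge0 (lam d) (Hnonneg d) (lam_ex d) 1%nat) as H. unfold T in H.
  simpl in H. pose proof (Hpos d). lra.
Qed.

Lemma bar_nonneg d k : 0 <= barlam lam d k.
Proof.
  unfold barlam. pose proof (Lam_pos d). pose proof (Hnonneg d k).
  apply Rmult_le_pos; auto. left; now apply Rinv_0_lt_compat.
Qed.

Lemma bar_dec d k : barlam lam d (S k) <= barlam lam d k.
Proof.
  unfold barlam, Rdiv. pose proof (Lam_pos d). apply Rmult_le_compat_r.
  left; now apply Rinv_0_lt_compat. apply Hdecr.
Qed.

Lemma bar_ex d : ex_series (barlam lam d).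
Proof. apply (ex_series_scal_r (/ Lam lam d) (lam d)), lam_ex. Qed.

Lemma bar_1 d : Series (barlam lam d) = 1.
Proof.
  unfold barlam, Rdiv. rewrite Series_scal_r.
  pose proof (Lam_pos d). unfold Lam in *. rewrite sv_Series in * by apply lam_ex.
  field. lra.
Qed.

Lemma tail_T d n : tail lam d n = T (barlam lam d) n.
Proof. unfold tail. rewrite sv_Series. reflexivity. apply Tex, bar_ex. Qed.

Lemma sm_G d t : small_mass lam d t = Series (G (barlam lam d) t).
Proof.
  unfold small_mass. rewrite sv_Series. reflexivity.
  apply G_ex. apply bar_nonneg. apply bar_ex.
Qed.

Lemma ncompl_spec d eps : (exists n, tail lam d n <= eps ^ 2) ->
  tail lam d (ncompl lam d eps) <= eps ^ 2 /\
  forall m, tail lam d m <= eps ^ 2 -> (ncompl lam d eps <= m)%nat.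
Proof.
  intros H.
  destruct (dec_inh_nat_subset_has_unique_least_element
              (fun n => tail lam d n <= eps ^ 2) (fun n => classic _) H)
    as [n [[H1 H2] _]].
  unfold ncompl. apply (epsilon_spec (inhabits 0%nat)
     (fun n => tail lam d n <= eps ^ 2 /\ forall m, tail lam d m <= eps ^ 2 -> (n <= m)%nat)).
  exists n. split; auto.
Qed.

End Main.

Theorem proposition3 (lam : nat -> nat -> R)
  (Hnonneg : forall d k, 0 <= lam d k)
  (Hdecr : forall d k, lam d (S k) <= lam d k)
  (Hsum : forall d, exists L, infinite_sum (lam d) L)
  (Hpos : forall d, 0 < lam d 0%nat) :
  (forall eps, 0 < eps < 1 -> exists N : nat, forall d, (ncompl lam d eps <= N)%nat)
  <->
  (forall e, 0 < e -> exists delta, 0 < delta /\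
     forall t, 0 < Rabs t < delta -> forall d, small_mass lam d t <= e).
Proof.
  split.
  - intros Hi e He.
    set (c := Rmin (e/2) (1/4)).
    assert (Hc : 0 < c) by (unfold c; apply Rmin_glb_lt; lra).
    assert (Hc4 : c <= 1/4) by apply Rmin_r.
    assert (Hce : c <= e/2) by apply Rmin_l.
    set (eps := sqrt c).
    assert (Heps2 : eps ^ 2 = c) by (unfold eps; rewrite <- Rsqr_pow2; apply Rsqr_sqrt; lra).
    assert (Heps : 0 < eps < 1).
    { unfold eps. split. apply sqrt_lt_R0; auto.
      rewrite <- sqrt_1. apply sqrt_lt_1; lra. }
    destruct (Hi eps Heps) as [N HN].
    exists (e / (2 * INR (S N))).
    assert (HSN : 0 < INR (S N)) by (apply lt_0_INR; lia).
    split. apply Rdiv_lt_0_compat; lra.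
    intros t [Ht1 Ht2] d.
    rewrite (sm_G lam Hnonneg Hsum Hpos).
    pose proof (bar_nonneg lam Hnonneg Hsum Hpos d) as P1.
    pose proof (bar_dec lam Hnonneg Hdecr Hsum Hpos d) as P2.
    pose proof (bar_ex lam Hsum d) as P3.
    pose proof (bar_1 lam Hnonneg Hsum Hpos d) as P4.
    destruct (ncompl_spec lam d eps) as [S1 _].
    { destruct (T_small _ P3 P4 (eps ^ 2)) as [n Hn]. lra.
      exists n. rewrite (tail_T lam Hsum). auto. }
    rewrite (tail_T lam Hsum) in S1.
    pose proof (G_upper _ P1 P3 N t) as U.
    assert (T (barlam lam d) (S N) <= T (barlam lam d) (ncompl lam d eps)).
    { apply T_mono; auto. }
    assert (INR (S N) * Rabs t <= e / 2).
    { apply Rmult_lt_compat_l with (r := INR (S N)) in Ht2; auto.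
      replace (INR (S N) * (e / (2 * INR (S N)))) with (e/2) in Ht2 by (field; lra).
      lra. }
    lra.
  - intros Hii eps Heps.
    assert (Hep2 : 0 < eps ^ 2) by (apply pow_lt; lra).
    destruct (Hii (eps ^ 2) Hep2) as [delta [Hd Hdd]].
    set (t := delta / 2).
    assert (Ht : 0 < t) by (unfold t; lra).
    destruct (INR_unbounded (1 / t)) as [M HM].
    assert (HMt : INR M * t > 1).
    { apply Rmult_gt_compat_r with (r := t) in HM; auto.
      replace (1 / t * t) with 1 in HM by (field; lra). lra. }
    assert (HM0 : (0 < M)%nat).
    { destruct M. simpl in HMt. lra. lia. }
    exists M. intros d.
    pose proof (bar_nonneg lam Hnonneg Hsum Hpos d) as P1.
    pose proof (bar_dec lam Hnonneg Hdecr Hsum Hpos d) as P2.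
    pose proof (bar_ex lam Hsum d) as P3.
    pose proof (bar_1 lam Hnonneg Hsum Hpos d) as P4.
    assert (HT : tail lam d M <= eps ^ 2).
    { rewrite (tail_T lam Hsum).
      eapply Rle_trans. apply (G_lower _ P1 P2 P3 P4 t M); auto.
      rewrite <- (sm_G lam Hnonneg Hsum Hpos). apply Hdd.
      rewrite Rabs_right by lra. unfold t. lra. }
    destruct (ncompl_spec lam d eps) as [_ S2].
    exists M; auto.
    apply S2; auto.
Qed.
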